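(* Let $\mathcal{L}$ be an algebraic signature containing at least one constant symbol, and let $\mathcal{V}$ be a coherent variety of $\mathcal{L}$-algebras with a term-definable join-semilattice reduct. Let $t(x,\bar{u})$ be an $\mathcal{L}$-term such that \[ \mathcal{V} \models x \le t(x,\bar{u}) \quad\text{and}\quad \mathcal{V} \models x \le y \,\Rightarrow\, t(x,\bar{u}) \le t(y,\bar{u}). \] Suppose that $\mathcal{V}$ satisfies the following fixpoint embedding condition (FE) with respect to $t(x,\bar{u})$: for any finitely generated $\mathbf{A}\in\mathcal{V}$ and any $a,\bar{b}\in A$, there exists $\mathbf{B}\in\mathcal{V}$ such that $\mathbf{A}$ is a subalgebra of $\mathbf{B}$, the join $\bigvee_{k\in\mathbb{N}} t^k(a,\bar{b})$ exists in $\mathbf{B}$, and \[ \bigvee_{k\in\mathbb{N}} t^k(a,\bar{b}) = t\Big(\bigvee_{k\in\mathbb{N}} t^k(a,\bar{b}),\bar{b}\Big). \] Then $\mathcal{V}\models t^n(x,\bar{u}) \approx t^{n+1}(x,\bar{u})$ for some $n\in\mathbb{N}$.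
   Context: A variety $\mathcal{V}$ is coherent if every finitely generated subalgebra of a finitely presented member of $\mathcal{V}$ is finitely presented; an algebra is finitely presented in $\mathcal{V}$ if it is isomorphic to $\mathbf{F}(\bar{x})/\Theta$ for a finite set $\bar{x}$ and a compact (finitely generated) congruence $\Theta$ on the free algebra $\mathbf{F}(\bar{x})$ of $\mathcal{V}$. ''Term-definable join-semilattice reduct'' means there is a binary term $\vee$ that defines a join-semilattice in every member of $\mathcal{V}$; $s\le t$ abbreviates $s\vee t\approx t$, and joins $\bigvee$ refer to this semilattice order. Iterates are defined by $t^0(x,\bar{u}) := x$ and $t^{k+1}(x,\bar{u}) := t(t^k(x,\bar{u}),\bar{u})$. *)

(* Defs.v *)
From Stdlib Require Import List.
From Stdlib Require Vectors.Fin.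

Record signature := Signature { sym : Type; arity : sym -> nat }.

Inductive term (L : signature) (X : Type) : Type :=
| Var : X -> term L X
| App : forall f : sym L, (Fin.t (arity L f) -> term L X) -> term L X.
Arguments Var {L X} x.
Arguments App {L X} f ts.

Record algebra (L : signature) := Algebra {
  carrier :> Type;
  op : forall f : sym L, (Fin.t (arity L f) -> carrier) -> carrier }.
Arguments Algebra {L} carrier op.
Arguments op {L} a f args : rename.

Fixpoint eval {L : signature} {X : Type} (A : algebra L) (v : X -> A)
  (t : term L X) : A :=
  match t with
  | Var x => v x
  | App f ts => op A f (fun i => eval A v (ts i))
  end.

Fixpoint subst {L : signature} {X Y : Type} (s : X -> term L Y)
  (t : term L X) : term L Y :=
  match t with
  | Var x => s x
  | App f ts => App f (fun i => subst s (ts i))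
  end.

(** Varieties: equational classes given by a set E of identities
    (in countably many variables). *)
Definition identities (L : signature) := term L nat -> term L nat -> Prop.

Definition in_var {L : signature} (E : identities L) (A : algebra L) : Prop :=
  forall s t, E s t -> forall v : nat -> A, eval A v s = eval A v t.

Definition V_eq {L : signature} (E : identities L) {X : Type}
  (s t : term L X) : Prop :=
  forall A : algebra L, in_var E A -> forall v : X -> A, eval A v s = eval A v t.

(** The congruence on the term algebra over n variables corresponding to the
    compact congruence on F(x_1..x_n) generated by the (finitely many) pairs R. *)
Inductive fp_cong {L : signature} (E : identities L) (n : nat)
  (R : list (term L (Fin.t n) * term L (Fin.t n))) :
  term L (Fin.t n) -> term L (Fin.t n) -> Prop :=
| fc_V s t : V_eq E s t -> fp_cong E n R s t
| fc_R s t : In (s, t) R -> fp_cong E n R s t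
| fc_refl s : fp_cong E n R s s
| fc_sym s t : fp_cong E n R s t -> fp_cong E n R t s
| fc_trans s t u : fp_cong E n R s t -> fp_cong E n R t u -> fp_cong E n R s u
| fc_compat f ss ts : (forall i, fp_cong E n R (ss i) (ts i)) ->
    fp_cong E n R (App f ss) (App f ts).

(** A is isomorphic to F(x_1..x_n)/Theta with Theta compact: there is a
    surjective homomorphism from the term algebra (generators g) whose kernel
    is exactly the preimage of Theta. *)
Definition fin_presented {L : signature} (E : identities L) (A : algebra L) : Prop :=
  exists (n : nat) (R : list (term L (Fin.t n) * term L (Fin.t n)))
         (g : Fin.t n -> A),
    (forall a : A, exists t, eval A g t = a) /\
    (forall s t, eval A g s = eval A g t <-> fp_cong E n R s t).

Inductive gen {L : signature} (A : algebra L) (n : nat) (g : Fin.t n -> A) : A -> Prop :=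
| gen_base i : gen A n g (g i)
| gen_op f args : (forall i, gen A n g (args i)) -> gen A n g (op A f args).

Definition sub_gen {L : signature} (A : algebra L) (n : nat) (g : Fin.t n -> A)
  : algebra L :=
  Algebra {a : A | gen A n g a}
    (fun f args => exist _ (op A f (fun i => proj1_sig (args i)))
                         (gen_op A n g f _ (fun i => proj2_sig (args i)))).

Definition fin_gen {L : signature} (A : algebra L) : Prop :=
  exists (n : nat) (g : Fin.t n -> A), forall a : A, gen A n g a.

Definition coherent {L : signature} (E : identities L) : Prop :=
  forall A : algebra L, in_var E A -> fin_presented E A ->
    forall (n : nat) (g : Fin.t n -> A), fin_presented E (sub_gen A n g).

Definition is_hom {L : signature} (A B : algebra L) (e : A -> B) : Prop :=
  forall f args, e (op A f args) = op B f (fun i => e (args i)).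

(** Binary term J (variables: true = x, false = y) and the induced operation. *)
Definition jn {L : signature} (J : term L bool) (A : algebra L) (x y : A) : A :=
  eval A (fun b : bool => if b then x else y) J.

Definition leJ {L : signature} (J : term L bool) (A : algebra L) (x y : A) : Prop :=
  jn J A x y = y.

Definition semilattice_term {L : signature} (E : identities L) (J : term L bool) : Prop :=
  forall A : algebra L, in_var E A -> forall x y z : A,
    jn J A x x = x /\ jn J A x y = jn J A y x /\
    jn J A (jn J A x y) z = jn J A x (jn J A y z).

(** Terms t(x, u) : variable 0 is x, the other variables are the parameters u. *)
Fixpoint titer {L : signature} (t : term L nat) (k : nat) : term L nat :=
  match k with
  | O => Var 0
  | S k => subst (fun i => match i with O => titer t k | _ => Var i end) t
  end.

Definition upd0 {A : Type} (v : nat -> A) (y : A) : nat -> A :=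
  fun i => match i with O => y | S j => v (S j) end.

Definition is_join {L : signature} (J : term L bool) (B : algebra L)
  (P : nat -> B) (s : B) : Prop :=
  (forall k, leJ J B (P k) s) /\
  (forall u, (forall k, leJ J B (P k) u) -> leJ J B s u).

Definition FE {L : signature} (E : identities L) (J : term L bool) (t : term L nat) : Prop :=
  forall A : algebra L, in_var E A -> fin_gen A ->
  forall v : nat -> A,
  exists (B : algebra L) (e : A -> B),
    in_var E B /\ is_hom A B e /\ (forall x y, e x = e y -> x = y) /\
    exists s : B,
      is_join J B (fun k => e (eval A v (titer t k))) s /\
      s = eval B (upd0 (fun i => e (v i)) s) t.

(* Main.v *)
Require Import Defs.
From Stdlib Require Import List Arith Lia FunctionalExtensionality PropExtensionality ProofIrrelevance IndefiniteDescription.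
From Stdlib Require Vectors.Fin.
Import ListNotations.

Section Gen.
Context {L : signature}.

Lemma eval_subst {X Y : Type} (A : algebra L) (u : Y -> A) (s0 : X -> term L Y) s :
  eval A u (subst s0 s) = eval A (fun i => eval A u (s0 i)) s.
Proof.
  induction s as [x|f ts IH]; simpl; [reflexivity|].
  f_equal; apply functional_extensionality; intro i; apply IH.
Qed.

Lemma subst_Var {X : Type} (s : term L X) : subst Var s = s.
Proof.
  induction s as [x|f ts IH]; simpl; [reflexivity|].
  f_equal; apply functional_extensionality; intro i; apply IH.
Qed.

Lemma hom_eval {X : Type} (A B : algebra L) e (He : is_hom A B e) (u : X -> A) s :
  e (eval A u s) = eval B (fun i => e (u i)) s.
Proof.
  induction s as [x|f ts IH]; simpl; [reflexivity|].
  rewrite He; f_equal; apply functional_extensionality; intro i; apply IH.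
Qed.

Definition Jt (J : term L bool) {X : Type} (P Q : term L X) : term L X :=
  subst (fun b : bool => if b then P else Q) J.

Lemma eval_Jt J {X : Type} (A : algebra L) (u : X -> A) P Q :
  eval A u (Jt J P Q) = jn J A (eval A u P) (eval A u Q).
Proof.
  unfold Jt, jn; rewrite eval_subst; f_equal;
  apply functional_extensionality; intros []; reflexivity.
Qed.

Lemma hom_jn J (A B : algebra L) e (He : is_hom A B e) x y :
  e (jn J A x y) = jn J B (e x) (e y).
Proof.
  unfold jn; rewrite (hom_eval A B e He); f_equal;
  apply functional_extensionality; intros []; reflexivity.
Qed.

Lemma eval_titer_S (A : algebra L) (v : nat -> A) t k :
  eval A v (titer t (S k)) = eval A (upd0 v (eval A v (titer t k))) t.
Proof.
  simpl titer; rewrite eval_subst; f_equal;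
  apply functional_extensionality; intros [|i]; reflexivity.
Qed.

Lemma sig_ext {T : Type} (P : T -> Prop) (x y : {a | P a}) :
  proj1_sig x = proj1_sig y -> x = y.
Proof.
  destruct x as [x px], y as [y py]; simpl; intro H; subst; f_equal;
  apply proof_irrelevance.
Qed.

Lemma fin_max m (P : nat -> Fin.t m -> Prop) :
  (forall n n' i, n <= n' -> P n i -> P n' i) ->
  (forall i, exists n, P n i) -> exists n, forall i, P n i.
Proof.
  revert P; induction m as [|m IH]; intros P Hm Hi.
  - exists 0; intro i; apply (Fin.case0 (fun _ => _) i).
  - destruct (Hi Fin.F1) as [n0 H0].
    destruct (IH (fun n i => P n (Fin.FS i))) as [n1 H1].
    + intros; eapply Hm; eauto.
    + intro i; apply Hi.
    + exists (max n0 n1); intro i.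
      apply (Fin.caseS' i (fun i => P (max n0 n1) i)).
      * eapply Hm; [|exact H0]; lia.
      * intro j; eapply Hm; [|exact (H1 j)]; lia.
Qed.

Lemma lmax {T : Type} (l : list T) (P : nat -> T -> Prop) :
  (forall n n' i, n <= n' -> P n i -> P n' i) ->
  (forall i, In i l -> exists n, P n i) -> exists n, forall i, In i l -> P n i.
Proof.
  intros Hm; induction l as [|a l IH]; intros Hi.
  - exists 0; intros i [].
  - destruct (Hi a (or_introl eq_refl)) as [n0 H0].
    destruct IH as [n1 H1]; [intros; apply Hi; right; auto|].
    exists (max n0 n1); intros i [<-|Hin].
    + eapply Hm; [|exact H0]; lia.
    + eapply Hm; [|exact (H1 i Hin)]; lia.
Qed.

Fixpoint fin_all (k : nat) : list (Fin.t k) :=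
  match k with 0 => nil | S k' => Fin.F1 :: map Fin.FS (fin_all k') end.

Lemma fin_all_In k (j : Fin.t k) : In j (fin_all k).
Proof.
  induction j; simpl; [left; reflexivity | right; apply in_map; auto].
Qed.

Section Quot.
Context {X : Type} (R : term L X -> term L X -> Prop).
Definition Qc := {P : term L X -> Prop | exists a, P = R a}.
Definition cls (a : term L X) : Qc := exist _ (R a) (ex_intro _ a eq_refl).
Definition rep (q : Qc) : term L X :=
  proj1_sig (constructive_indefinite_description _ (proj2_sig q)).
Lemma cls_rep q : cls (rep q) = q.
Proof.
  destruct q as [P HP]; unfold rep, cls; simpl.
  destruct (constructive_indefinite_description _ HP) as [a Ha]; simpl.
  subst P; f_equal; apply proof_irrelevance.
Qed.
Definition QA : algebra L :=
  Algebra Qc (fun f args => cls (App f (fun i => rep (args i)))).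

Hypothesis Hrefl : forall a, R a a.
Hypothesis Hsym : forall a b, R a b -> R b a.
Hypothesis Htrans : forall a b c, R a b -> R b c -> R a c.
Hypothesis Hcomp : forall f ss ts, (forall i, R (ss i) (ts i)) -> R (App f ss) (App f ts).

Lemma cls_eq a b : cls a = cls b <-> R a b.
Proof.
  split.
  - intro H. apply (f_equal (@proj1_sig _ _)) in H; simpl in H.
    rewrite H; apply Hrefl.
  - intro H. assert (E : R a = R b).
    { apply functional_extensionality; intro c; apply propositional_extensionality;
      split; intro; eauto. }
    unfold cls. generalize (ex_intro (fun a0 => R a = R a0) a eq_refl).
    generalize (ex_intro (fun a0 => R b = R a0) b eq_refl).
    rewrite E. intros; f_equal; apply proof_irrelevance.
Qed.

Lemma rep_cls a : R (rep (cls a)) a.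
Proof. apply cls_eq; apply cls_rep. Qed.

Lemma cls_App f ts : op QA f (fun i => cls (ts i)) = cls (App f ts).
Proof. simpl; apply cls_eq; apply Hcomp; intro i; apply rep_cls. Qed.

Lemma eval_QA {Y : Type} (rho : Y -> term L X) s :
  eval QA (fun i => cls (rho i)) s = cls (subst rho s).
Proof.
  induction s as [x|f ts IH]; [reflexivity|].
  change (op QA f (fun i => eval QA (fun i0 => cls (rho i0)) (ts i)) =
          cls (App f (fun i => subst rho (ts i)))).
  rewrite <- cls_App; f_equal; apply functional_extensionality; intro i; apply IH.
Qed.

Lemma jn_cls J (P Q : term L X) : jn J QA (cls P) (cls Q) = cls (Jt J P Q).
Proof.
  unfold jn, Jt; rewrite <- eval_QA; f_equal;
  apply functional_extensionality; intros []; reflexivity.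
Qed.

Lemma QA_in_var E : (forall a b, V_eq E a b -> R a b) -> in_var E QA.
Proof.
  intros HV s t Hst v.
  set (rho := fun i => rep (v i)).
  assert (Hv : v = fun i => cls (rho i)).
  { apply functional_extensionality; intro i; unfold rho; rewrite cls_rep; reflexivity. }
  rewrite Hv, !eval_QA. apply cls_eq, HV. intros D HD u.
  rewrite !eval_subst. apply HD; exact Hst.
Qed.

Lemma QA_surj (q : QA) : exists a, q = cls a.
Proof. exists (rep q); symmetry; apply cls_rep. Qed.
End Quot.

Lemma QA_gen n (R : term L (Fin.t n) -> term L (Fin.t n) -> Prop)
  (Hrefl : forall a, R a a) (Hsym : forall a b, R a b -> R b a)
  (Htrans : forall a b c, R a b -> R b c -> R a c)
  (Hcomp : forall f ss ts, (forall i, R (ss i) (ts i)) -> R (App f ss) (App f ts))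
  a : gen (QA R) n (fun i => cls R (Var i)) (cls R a).
Proof.
  induction a as [x|f ts IH]; [exact (gen_base (QA R) n (fun i => cls R (Var i)) x)|].
  rewrite <- cls_App by assumption. apply gen_op; exact IH.
Qed.

Lemma fp_sound (E : identities L) n R a b : @fp_cong L E n R a b ->
  forall D, in_var E D -> forall u, (forall p q, In (p, q) R -> eval D u p = eval D u q) ->
  eval D u a = eval D u b.
Proof.
  induction 1; intros D HD uu HR.
  - apply H; auto.
  - apply HR; auto.
  - reflexivity.
  - symmetry; eauto.
  - rewrite (IHfp_cong1 D HD uu HR); eauto.
  - simpl; f_equal; apply functional_extensionality; intro i; eauto.
Qed.

Lemma gen_change (E : identities L) (D : algebra L) k (h : Fin.t k -> D) :
  in_var E D -> (forall d, exists a, eval D h a = d) -> fin_presented E D ->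
  exists R2, forall a b, eval D h a = eval D h b <-> fp_cong E k R2 a b.
Proof.
  intros HD Hgen [n' [R' [g [Hs Hk]]]].
  set (p := fun i => proj1_sig (constructive_indefinite_description _ (Hgen (g i)))).
  assert (Hp : forall i, eval D h (p i) = g i)
    by (intro i; unfold p; destruct constructive_indefinite_description; auto).
  set (q := fun j => proj1_sig (constructive_indefinite_description _ (Hs (h j)))).
  assert (Hq : forall j, eval D g (q j) = h j)
    by (intro j; unfold q; destruct constructive_indefinite_description; auto).
  exists (map (fun pr => (subst p (fst pr), subst p (snd pr))) R' ++
          map (fun j => (Var j, subst p (q j))) (fin_all k)).
  set (R2 := _ ++ _).
  assert (Hhp : forall x, eval D h (subst p x) = eval D g x).
  { intro x; rewrite eval_subst; f_equal; apply functional_extensionality; auto. }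
  assert (Hgq : forall x, eval D g (subst q x) = eval D h x).
  { intro x; rewrite eval_subst; f_equal; apply functional_extensionality; auto. }
  assert (Hsub : forall a b, fp_cong E n' R' a b -> fp_cong E k R2 (subst p a) (subst p b)).
  { induction 1.
    - apply fc_V; intros D' HD' u; rewrite !eval_subst; apply H; auto.
    - apply fc_R; apply in_or_app; left; apply in_map_iff; exists (s, t); auto.
    - apply fc_refl.
    - apply fc_sym; auto.
    - eapply fc_trans; eauto.
    - simpl; apply fc_compat; auto. }
  assert (Hback : forall a, fp_cong E k R2 a (subst p (subst q a))).
  { induction a as [x|f ts IH].
    - apply fc_R; apply in_or_app; right; apply in_map_iff; exists x; split; auto.
      apply fin_all_In.
    - simpl; apply fc_compat; auto. }
  intros a b; split.
  - intro Hab. assert (H1 : fp_cong E n' R' (subst q a) (subst q b))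
      by (apply Hk; rewrite !Hgq; auto).
    eapply fc_trans; [apply Hback|]. eapply fc_trans; [apply Hsub; exact H1|].
    apply fc_sym, Hback.
  - intro H. eapply fp_sound; eauto.
    intros p0 q0 Hin. apply in_app_or in Hin as [Hin|Hin].
    + apply in_map_iff in Hin as [[x y] [Heq Hin]]; inversion Heq; subst.
      rewrite !Hhp. apply Hk. apply fc_R; auto.
    + apply in_map_iff in Hin as [j [Heq _]]; inversion Heq; subst.
      simpl; rewrite Hhp, Hq; auto.
Qed.

End Gen.

Fixpoint bnd {L : signature} (N : nat) (s : term L nat) : Prop :=
  match s with Var i => i < N | App f ts => forall j, bnd N (ts j) end.

Section Bnd.
Context {L : signature}.
Lemma bnd_mono N N' (s : term L nat) : bnd N s -> N <= N' -> bnd N' s.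
Proof. induction s; simpl; intros; [lia|]. eauto. Qed.

Lemma bnd_ex (s : term L nat) : exists N, bnd N s.
Proof.
  induction s as [x|f ts IH]; [exists (S x); simpl; lia|].
  apply (fin_max _ (fun n j => bnd n (ts j))); auto.
  intros; eapply bnd_mono; eauto.
Qed.

Lemma bnd_subst N (sg : nat -> term L nat) s :
  (forall i, i < N -> bnd N (sg i)) -> bnd N s -> bnd N (subst sg s).
Proof. induction s; simpl; auto. Qed.

Lemma bnd_titer N t k : 0 < N -> bnd N t -> bnd N (@titer L t k).
Proof.
  intros HN Ht; induction k; simpl; [lia|].
  apply bnd_subst; auto. intros [|i] Hi; simpl; auto.
Qed.

Lemma eval_bnd N (A : algebra L) v v' s : bnd N s -> (forall i, i < N -> v i = v' i) ->
  eval A v s = eval A v' s.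
Proof.
  induction s as [x|f ts IH]; simpl; intros Hb Hv; auto.
  f_equal; apply functional_extensionality; intro i; auto.
Qed.
End Bnd.

Definition tn {m} (i : Fin.t m) : nat := proj1_sig (Fin.to_nat i).
Definition fc (m i : nat) : Fin.t (S m) :=
  match lt_dec i (S m) with left H => Fin.of_nat_lt H | right _ => Fin.F1 end.

Lemma tn_fc m i : i < S m -> tn (fc m i) = i.
Proof.
  intro H; unfold fc; destruct (lt_dec i (S m)); [|lia].
  unfold tn; rewrite Fin.to_nat_of_nat; reflexivity.
Qed.

Lemma fc_tn m (a : Fin.t (S m)) : fc m (tn a) = a.
Proof.
  unfold fc, tn. destruct (lt_dec _ _) as [H|H].
  - rewrite <- (Fin.of_nat_to_nat_inv a) at 2. apply Fin.of_nat_ext.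
  - exfalso; apply H; apply (proj2_sig (Fin.to_nat a)).
Qed.

Lemma tn_lt {m} (a : Fin.t m) : tn a < m.
Proof. apply (proj2_sig (Fin.to_nat a)). Qed.

Section MainSec.
Context (L : signature) (E : identities L) (J : term L bool) (t : term L nat).
Hypothesis HJ : semilattice_term E J.
Hypothesis Hinf : forall A : algebra L, in_var E A -> forall v : nat -> A,
        leJ J A (v 0) (eval A v t).
Hypothesis Hmon : forall A : algebra L, in_var E A -> forall (v : nat -> A) (y : A),
        leJ J A (v 0) y -> leJ J A (eval A v t) (eval A (upd0 v y) t).
Hypothesis HFE : FE E J t.
Hypothesis Hcoh : coherent E.
Variable N : nat.
Hypothesis HN : bnd N t.
Hypothesis HN1 : 0 < N.

Lemma le_refl' D : in_var E D -> forall a : D, leJ J D a a.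
Proof. intros HD a; apply (HJ D HD a a a). Qed.
Lemma le_trans' D : in_var E D -> forall a b c : D, leJ J D a b -> leJ J D b c -> leJ J D a c.
Proof.
  intros HD a b c Hab Hbc; unfold leJ in *.
  rewrite <- Hbc. destruct (HJ D HD a b c) as [_ [_ H3]]. rewrite <- H3, Hab; reflexivity.
Qed.
Lemma le_antisym' D : in_var E D -> forall a b : D, leJ J D a b -> leJ J D b a -> a = b.
Proof.
  intros HD a b Hab Hba; unfold leJ in *.
  rewrite <- Hab, <- Hba at 1. apply (HJ D HD b a a).
Qed.

Lemma titer_le D : in_var E D -> forall v n n', n <= n' ->
  leJ J D (eval D v (titer t n)) (eval D v (titer t n')).
Proof.
  intros HD v n n' H; induction H; [apply le_refl'; auto|].
  eapply le_trans'; eauto. rewrite eval_titer_S.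
  apply (Hinf D HD (upd0 v (eval D v (titer t m)))).
Qed.

Definition T k : term L (Fin.t (S N)) := subst (fun i => Var (fc N i)) (titer t k).
Definition wN : Fin.t (S N) := fc N N.

Lemma eval_T (D : algebra L) (u : Fin.t (S N) -> D) k : eval D u (T k) = eval D (fun i => u (fc N i)) (titer t k).
Proof. unfold T; rewrite eval_subst; reflexivity. Qed.

Definition Kn n (a b : term L (Fin.t (S N))) : Prop :=
  forall D, in_var E D -> forall u : Fin.t (S N) -> D,
    leJ J D (eval D u (T n)) (u wN) -> eval D u a = eval D u b.
Definition Kinf a b := exists n, Kn n a b.

Lemma Kn_mono n n' a b : n <= n' -> Kn n a b -> Kn n' a b.
Proof.
  intros Hn H D HD u Hu. apply H; auto. eapply le_trans'; [auto| |exact Hu].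
  rewrite !eval_T; apply titer_le; auto.
Qed.

Lemma Kinf_refl a : Kinf a a.
Proof. exists 0; intros ? ? ? ?; reflexivity. Qed.
Lemma Kinf_sym a b : Kinf a b -> Kinf b a.
Proof. intros [n H]; exists n; intros D HD u Hu; symmetry; auto. Qed.
Lemma Kinf_trans a b c : Kinf a b -> Kinf b c -> Kinf a c.
Proof.
  intros [n H] [n' H']; exists (max n n'); intros D HD u Hu.
  rewrite (Kn_mono n (max n n') a b ltac:(lia) H D HD u Hu).
  apply (Kn_mono n' (max n n') b c ltac:(lia) H' D HD u Hu).
Qed.
Lemma Kinf_comp f ss ts : (forall i, Kinf (ss i) (ts i)) -> Kinf (App f ss) (App f ts).
Proof.
  intro H. destruct (fin_max _ (fun n i => Kn n (ss i) (ts i))) as [n Hn].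
  - intros; eapply Kn_mono; eauto.
  - exact H.
  - exists n; intros D HD u Hu; simpl; f_equal; apply functional_extensionality;
    intro i; apply Hn; auto.
Qed.

Definition C := QA Kinf.
Lemma C_in_var : in_var E C.
Proof.
  apply QA_in_var; [exact Kinf_refl|exact Kinf_sym|exact Kinf_trans|exact Kinf_comp|].
  intros a b H; exists 0; intros D HD u _; apply H; auto.
Qed.
Lemma C_fin_gen : fin_gen C.
Proof.
  exists (S N), (fun i => cls Kinf (Var i)). intro q.
  destruct (QA_surj Kinf q) as [a ->].
  apply QA_gen; [exact Kinf_refl|exact Kinf_sym|exact Kinf_trans|exact Kinf_comp].
Qed.

Definition embv (i : Fin.t (S N)) : term L (Fin.t (S (S N))) := Var (fc (S N) (tn i)).
Definition emb (a : term L (Fin.t (S N))) := subst embv a.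
Definition xA := fc (S N) 0.
Definition yA := fc (S N) (S N).
Definition wA := fc (S N) N.
Definition Ty := subst (fun i => match i with 0 => Var yA | S j => emb (Var (fc N (S j))) end) t.
Definition RA := [(Jt J (Var xA) (Var yA), Var yA); (Var yA, Ty); (Jt J (Var yA) (Var wA), Var wA)].
Definition Acong := fp_cong E (S (S N)) RA.
Definition A := QA Acong.

Lemma Ac_refl a : Acong a a. Proof. apply fc_refl. Qed.
Lemma Ac_sym a b : Acong a b -> Acong b a. Proof. apply fc_sym. Qed.
Lemma Ac_trans a b c : Acong a b -> Acong b c -> Acong a c. Proof. apply fc_trans. Qed.
Lemma Ac_comp f ss ts : (forall i, Acong (ss i) (ts i)) -> Acong (App f ss) (App f ts).
Proof. apply fc_compat. Qed.

Lemma A_in_var : in_var E A.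
Proof.
  apply QA_in_var; [exact Ac_refl|exact Ac_sym|exact Ac_trans|exact Ac_comp|].
  intros; apply fc_V; auto.
Qed.

Lemma A_eval a : eval A (fun i => cls Acong (Var i)) a = cls Acong a.
Proof.
  rewrite (eval_QA Acong Ac_refl Ac_sym Ac_trans Ac_comp); rewrite subst_Var; auto.
Qed.

Lemma A_fp : fin_presented E A.
Proof.
  exists (S (S N)), RA, (fun i => cls Acong (Var i)). split.
  - intro q; destruct (QA_surj Acong q) as [a ->]; exists a; apply A_eval.
  - intros s0 t0; rewrite !A_eval; apply (cls_eq Acong Ac_refl Ac_sym Ac_trans).
Qed.

Definition hA (i : Fin.t (S N)) : A := cls Acong (embv i).
Definition S0 := sub_gen A (S N) hA.
Definition h' (i : Fin.t (S N)) : S0 := exist _ (hA i) (gen_base A (S N) hA i).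

Lemma proj_eval (v : Fin.t (S N) -> S0) a :
  proj1_sig (eval S0 v a) = eval A (fun i => proj1_sig (v i)) a.
Proof.
  induction a as [x|f ts IH]; [reflexivity|].
  change (op A f (fun i => proj1_sig (eval S0 v (ts i))) = op A f (fun i => eval A (fun i0 => proj1_sig (v i0)) (ts i))).
  f_equal; apply functional_extensionality; intro i; apply IH.
Qed.
Lemma proj_eval_nat (v : nat -> S0) a :
  proj1_sig (eval S0 v a) = eval A (fun i => proj1_sig (v i)) a.
Proof.
  induction a as [x|f ts IH]; [reflexivity|].
  change (op A f (fun i => proj1_sig (eval S0 v (ts i))) = op A f (fun i => eval A (fun i0 => proj1_sig (v i0)) (ts i))).
  f_equal; apply functional_extensionality; intro i; apply IH.
Qed.

Lemma S0_in_var : in_var E S0.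
Proof.
  intros s0 t0 H v. apply sig_ext. rewrite !proj_eval_nat. apply A_in_var; auto.
Qed.

Lemma S0_surj (d : S0) : exists a, eval S0 h' a = d.
Proof.
  destruct d as [d pd].
  assert (G : exists a, proj1_sig (eval S0 h' a) = d).
  { induction pd as [i|f args H IH].
    - exists (Var i); reflexivity.
    - set (ts := fun i => proj1_sig (constructive_indefinite_description _ (IH i))).
      assert (Hts : forall i, proj1_sig (eval S0 h' (ts i)) = args i)
        by (intro i; unfold ts; destruct constructive_indefinite_description; auto).
      exists (App f ts).
      change (op A f (fun i => proj1_sig (eval S0 h' (ts i))) = op A f args).
      f_equal; apply functional_extensionality; intro i; apply Hts. }
  destruct G as [a Ha]; exists a; apply sig_ext; exact Ha.
Qed.

Lemma A_eval_h a : eval A hA a = cls Acong (emb a).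
Proof. apply (eval_QA Acong Ac_refl Ac_sym Ac_trans Ac_comp). Qed.

Definition K a b := eval S0 h' a = eval S0 h' b.
Lemma K_iff a b : K a b <-> Acong (emb a) (emb b).
Proof.
  unfold K; split.
  - intro H; apply (f_equal (@proj1_sig _ _)) in H. rewrite !proj_eval in H.
    simpl in H. rewrite !A_eval_h in H.
    apply (cls_eq Acong Ac_refl Ac_sym Ac_trans) in H; auto.
  - intro H; apply sig_ext. rewrite !proj_eval; simpl. rewrite !A_eval_h.
    apply (cls_eq Acong Ac_refl Ac_sym Ac_trans); auto.
Qed.

Lemma Kinf_of_A a b : Acong (emb a) (emb b) -> Kinf a b.
Proof.
  intros Hab.
  set (vC := fun i => cls Kinf (Var (fc N i)) : C).
  destruct (HFE C C_in_var C_fin_gen vC) as [B [e [HB [Hhom [Hinj [s [[Hj1 Hj2] Hfix]]]]]]].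
  assert (HC : forall k, eval C vC (titer t k) = cls Kinf (T k))
    by (intro k; apply (eval_QA Kinf Kinf_refl Kinf_sym Kinf_trans Kinf_comp)).
  set (u' := fun idx : Fin.t (S (S N)) => if Nat.eq_dec (tn idx) (S N) then s
                 else e (cls Kinf (Var (fc N (tn idx))))).
  assert (Hemb : forall a0, eval B u' (emb a0) = e (cls Kinf a0)).
  { intro a0. unfold emb; rewrite eval_subst.
    transitivity (eval B (fun i => e (cls Kinf (Var i))) a0).
    - f_equal; apply functional_extensionality; intro i; unfold embv; simpl.
      unfold u'. pose proof (tn_lt i). rewrite tn_fc by lia.
      destruct Nat.eq_dec; [lia|]. rewrite fc_tn; auto.
    - rewrite <- (hom_eval C B e Hhom). f_equal.
      rewrite (eval_QA Kinf Kinf_refl Kinf_sym Kinf_trans Kinf_comp (fun i => Var i)).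
      rewrite subst_Var; auto. }
  assert (HuY : u' yA = s)
    by (unfold u', yA; rewrite tn_fc by lia; destruct Nat.eq_dec; [reflexivity|lia]).
  assert (Hcls : cls Kinf a = cls Kinf b).
  { apply Hinj; rewrite <- !Hemb. eapply fp_sound; [exact Hab | exact HB |].
    intros p q Hin; simpl in Hin; destruct Hin as [H|[H|[H|[]]]]; injection H as <- <-.
    - rewrite eval_Jt. simpl. rewrite HuY.
      unfold u', xA; rewrite tn_fc by lia; destruct Nat.eq_dec; [lia|].
      exact (Hj1 0).
    - simpl; rewrite HuY. apply eq_trans with (eval B (upd0 (fun i => e (vC i)) s) t); [exact Hfix|].
      unfold Ty; rewrite eval_subst; f_equal; apply functional_extensionality; intros [|j].
      + simpl; rewrite HuY; reflexivity.
      + rewrite Hemb; reflexivity.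
    - rewrite eval_Jt. simpl. rewrite HuY.
      unfold u', wA; rewrite tn_fc by lia; destruct Nat.eq_dec; [lia|].
      apply Hj2; intro k. rewrite HC. unfold leJ; rewrite <- (hom_jn J C B e Hhom). f_equal.
      unfold C. rewrite (jn_cls Kinf Kinf_refl Kinf_sym Kinf_trans Kinf_comp).
      apply (cls_eq Kinf Kinf_refl Kinf_sym Kinf_trans).
      exists k; intros D HD u Hu; rewrite eval_Jt; exact Hu. }
  apply (cls_eq Kinf Kinf_refl Kinf_sym Kinf_trans) in Hcls; exact Hcls.
Qed.

Lemma target m : K (Jt J (T m) (Var wN)) (Var wN).
Proof.
  apply K_iff. apply (cls_eq Acong Ac_refl Ac_sym Ac_trans).
  rewrite <- !A_eval_h. rewrite eval_Jt, eval_T. simpl (eval A hA (Var wN)).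
  set (vA := fun i => hA (fc N i)).
  set (Y := cls Acong (Var yA)).
  assert (C2 : leJ J A Y (hA wN)).
  { unfold hA, embv, wN; rewrite tn_fc by lia. unfold leJ, Y, A.
    rewrite (jn_cls Acong Ac_refl Ac_sym Ac_trans Ac_comp).
    apply (cls_eq Acong Ac_refl Ac_sym Ac_trans). apply fc_R; simpl; auto. }
  assert (C1 : forall k, leJ J A (eval A vA (titer t k)) Y).
  { induction k as [|k IHk].
    - simpl. unfold vA, hA, embv; rewrite tn_fc by lia. unfold leJ, Y, A.
      rewrite (jn_cls Acong Ac_refl Ac_sym Ac_trans Ac_comp).
      apply (cls_eq Acong Ac_refl Ac_sym Ac_trans). apply fc_R; simpl; auto.
    - rewrite eval_titer_S. eapply le_trans'; [exact A_in_var| apply Hmon; [exact A_in_var| exact IHk] |].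
      assert (HY : Y = cls Acong Ty).
      { apply (cls_eq Acong Ac_refl Ac_sym Ac_trans). apply fc_R; simpl; auto. }
      set (sg := fun i => match i with 0 => Var yA | S j => emb (Var (fc N (S j))) end).
      assert (Hf : upd0 (upd0 vA (eval A vA (titer t k))) Y = (fun i => cls Acong (sg i)))
        by (apply functional_extensionality; intros [|j]; reflexivity).
      rewrite Hf. unfold A; rewrite (eval_QA Acong Ac_refl Ac_sym Ac_trans Ac_comp sg t).
      change (leJ J A (cls Acong Ty) Y). rewrite <- HY; apply le_refl'; exact A_in_var. }
  change (leJ J A (eval A vA (titer t m)) (hA wN)). eapply le_trans'; [exact A_in_var|apply C1|exact C2].
Qed.

Lemma main_result : exists n, forall D : algebra L, in_var E D -> forall v : nat -> D,
  eval D v (titer t n) = eval D v (titer t (S n)).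
Proof.
  pose proof (Hcoh A A_in_var A_fp (S N) hA) as HS.
  destruct (gen_change E S0 (S N) h' S0_in_var S0_surj HS) as [R2 HR2].
  destruct (lmax R2 (fun n pr => Kn n (fst pr) (snd pr))) as [n Hn].
  - intros; eapply Kn_mono; eauto.
  - intros [p q] Hin. assert (Hk : K p q) by (apply HR2; apply fc_R; auto).
    apply K_iff, Kinf_of_A in Hk. exact Hk.
  - assert (Hsub : forall a b, fp_cong E (S N) R2 a b -> Kn n a b).
    { induction 1.
      - intros D HD uu _; apply H; auto.
      - apply (Hn (s, t0) H).
      - intros D HD uu _; reflexivity.
      - intros D HD uu Hu; symmetry; auto.
      - intros D HD uu Hu; rewrite (IHfp_cong1 D HD uu Hu); auto.
      - intros D HD uu Hu; simpl; f_equal; apply functional_extensionality; intro i; apply H0; auto. }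
    exists n. intros D HD v.
    pose proof (Hsub _ _ (proj1 (HR2 _ _) (target (S n)))) as H.
    set (u := fun i : Fin.t (S N) => if Nat.eq_dec (tn i) N then eval D v (titer t n) else v (tn i)).
    assert (Hu : forall k, eval D u (T k) = eval D v (titer t k)).
    { intro k; rewrite eval_T; apply eval_bnd with N; [apply bnd_titer; auto|].
      intros i Hi; unfold u; rewrite tn_fc by lia; destruct Nat.eq_dec; [lia|auto]. }
    assert (HuW : u wN = eval D v (titer t n))
      by (unfold u, wN; rewrite tn_fc by lia; destruct Nat.eq_dec; [auto|lia]).
    specialize (H D HD u). rewrite eval_Jt, !Hu in H.
    change (eval D u (Var wN)) with (u wN) in H. rewrite HuW in H.
    apply le_antisym'; [auto| apply titer_le; auto | apply H].
    apply le_refl'; auto.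
Qed.
End MainSec.

Theorem theorem3p1 :
  forall (L : signature), (exists c : sym L, arity L c = 0) ->
  forall (E : identities L), coherent E ->
  forall (J : term L bool), semilattice_term E J ->
  forall (t : term L nat),
    (forall A : algebra L, in_var E A -> forall v : nat -> A,
        leJ J A (v 0) (eval A v t)) ->
    (forall A : algebra L, in_var E A -> forall (v : nat -> A) (y : A),
        leJ J A (v 0) y -> leJ J A (eval A v t) (eval A (upd0 v y) t)) ->
    FE E J t ->
    exists n : nat, forall A : algebra L, in_var E A -> forall v : nat -> A,
      eval A v (titer t n) = eval A v (titer t (S n)).
Proof.
  intros L _ E Hcoh J HJ t Hinf Hmon HFE.
  destruct (bnd_ex t) as [N0 HN0].
  apply (main_result L E J t HJ Hinf Hmon HFE Hcoh (S N0)).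
  - eapply bnd_mono; [exact HN0|lia].
  - lia.
Qed.
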